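(* Let $\nu$ be an ergodic $S$-invariant probability measure on $X_\eta$ different from the Dirac measure at the all-zero sequence. Then for each $k\ge1$ there exists $b'_k$ with $1<b'_k$ and $b'_k\mid b_k$ such that all $b'_k$-th roots of unity are eigenvalues of $(S,X_\eta,\nu)$. In particular the system $(S,X_\eta,\nu)$ has infinite rational discrete spectrum.
   Context: Let $S$ be the shift on $\{0,1\}^{\mathbb Z}$, $(Sx)(n)=x(n+1)$. Let $\mathscr{B}=\{b_1,b_2,\dots\}\subset\{2,3,\dots\}$ with $\gcd(b_i,b_j)=1$ for $i\ne j$ and $\sum_i1/b_i<\infty$. Define $\eta(n)=1$ iff $b_i\nmid n$ for all $i$ (else $0$), and let $X_\eta$ be the set of $y\in\{0,1\}^{\mathbb Z}$ all of whose finite blocks occur in $\eta$; equivalently $y\in X_\eta$ iff $|\mathrm{supp}(y)\bmod b_i|<b_i$ for all $i$, with $\mathrm{supp}(y)=\{n:y(n)=1\}$. An eigenvalue of $(S,X_\eta,\nu)$ is $\lambda\in\mathbb C$ such that $f\circ S=\lambda f$ for some nonzero $f\in L^2(\nu)$. *)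

(* Defs.v *)
From HB Require Import structures.
From mathcomp Require Import all_boot all_order all_algebra.
From mathcomp Require Import all_classical all_reals all_analysis.
From mathcomp Require Import complex.
Set Implicit Arguments. Unset Strict Implicit. Unset Printing Implicit Defensive.
Import Order.TTheory GRing.Theory Num.Theory.
Local Open Scope classical_set_scope.
Local Open Scope ring_scope.

(* Points of {0,1}^Z : true = 1, false = 0. *)
Definition cylinders : set (set (int -> bool)) :=
  [set A | exists (n : int) (e : bool), A = [set y | y n = e]].

Definition Omega := g_sigma_algebraType cylinders.

Definition shift (x : Omega) : Omega := fun n => x (n + 1)%R.

Definition zero_seq : Omega := fun _ => false.

Definition eta (b : nat -> nat) : int -> bool :=
  fun n => `[< forall i, ~ (b i %| `|n|)%N >].

Definition Xeta (b : nat -> nat) : set Omega :=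
  [set y | forall (m : int) (len : nat), exists t : int,
     forall j : nat, (j < len)%N -> y (m + j%:Z)%R = eta b (t + j%:Z)%R].

Definition shift_invariant {R : realType} (nu : probability Omega R) :=
  forall A : set Omega, measurable A -> nu (shift @^-1` A) = nu A.

Definition ergodic {R : realType} (nu : probability Omega R) :=
  forall A : set Omega, measurable A -> shift @^-1` A = A ->
    nu A = 0%E \/ nu A = 1%E.

Definition cmeasurable {R : realType} (f : Omega -> R[i]) :=
  measurable_fun setT (fun x => complex.Re (f x)) /\
  measurable_fun setT (fun x => complex.Im (f x)).

Definition in_L2 {R : realType} (nu : probability Omega R) (f : Omega -> R[i]) :=
  cmeasurable f /\
  (\int[nu]_x ((complex.Re (f x)) ^+ 2 + (complex.Im (f x)) ^+ 2)%:E < +oo)%E.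

Definition sys_eigenvalue {R : realType} (nu : probability Omega R) (lam : R[i]) :=
  exists f : Omega -> R[i],
    in_L2 nu f /\
    ~ (\forall x \ae nu, f x = 0) /\
    (\forall x \ae nu, f (shift x) = lam * f x).

(* Main.v *)
Require Import Defs.
From HB Require Import structures.
From mathcomp Require Import all_boot all_order all_algebra.
From mathcomp Require Import all_classical all_reals all_analysis.
From mathcomp Require Import complex.
From mathcomp Require Import zify ring lra.
Import Order.TTheory GRing.Theory Num.Theory.
Local Open Scope classical_set_scope.
Local Open Scope ring_scope.

Definition miss (B : nat) (y : Omega) (r : int) : Prop :=
  forall m : int, y (r + m * B%:Z) = false.

Lemma ord_gt0 {B} (r : 'I_B) : (0 < B)%N.
Proof. exact: leq_ltn_trans (leq0n r) (ltn_ord r). Qed.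

Definition ordadd {B} (r : 'I_B) (j : nat) : 'I_B :=
  Ordinal (ltn_pmod (r + j) (ord_gt0 r)).

Definition pat B (y : Omega) : {ffun 'I_B -> bool} :=
  [ffun r : 'I_B => `[< miss B y (nat_of_ord r)%:Z >]].

Definition rot {B} (j : nat) (p : {ffun 'I_B -> bool}) : {ffun 'I_B -> bool} :=
  [ffun r : 'I_B => p (ordadd r j)].

Lemma miss_add B (y : Omega) (r c : int) : miss B y (r + c * B%:Z) <-> miss B y r.
Proof.
split=> h m.
  have E : r + c * B%:Z + (m - c) * B%:Z = r + m * B%:Z by ring.
  by have := h (m - c); rewrite E.
have E : r + c * B%:Z + m * B%:Z = r + (c + m) * B%:Z by ring.
by rewrite E; apply: h.
Qed.

Lemma miss_mod B (y : Omega) (r : int) : miss B y ((r %% B%:Z)%Z) <-> miss B y r.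
Proof.
rewrite -(miss_add B y _ (r %/ B%:Z)%Z) addrC.
by rewrite -divz_eq.
Qed.

Lemma miss_shift B (y : Omega) (r : int) : miss B (Defs.shift y) r <-> miss B y (r + 1).
Proof.
by split=> h m; have := h m; rewrite /Defs.shift; rewrite addrAC.
Qed.

Lemma rot_pat B j (y : Omega) (r : 'I_B) :
  rot j (pat B y) r = `[< miss B y (r + j)%:Z >].
Proof.
rewrite /rot /pat !ffunE /ordadd /=.
congr (`[< _ >]); apply: propext.
by rewrite -modz_nat miss_mod.
Qed.

Lemma pat_shift B (y : Omega) : pat B (Defs.shift y) = rot 1 (pat B y).
Proof.
apply/ffunP => r; rewrite rot_pat /pat ffunE.
congr (`[< _ >]); apply: propext.
by rewrite miss_shift PoszD.
Qed.

Lemma rot_rot B i j (p : {ffun 'I_B -> bool}) : rot i (rot j p) = rot (i + j) p.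
Proof.
apply/ffunP => r; rewrite /rot !ffunE; congr (p _); apply: val_inj => /=.
by rewrite modnDml addnA.
Qed.

Lemma rot0 B (p : {ffun 'I_B -> bool}) : rot 0 p = p.
Proof.
apply/ffunP => r; rewrite /rot !ffunE; congr (p _); apply: val_inj => /=.
by rewrite addn0 modn_small.
Qed.

Lemma rotB B (p : {ffun 'I_B -> bool}) : rot B p = p.
Proof.
apply/ffunP => r; rewrite /rot !ffunE; congr (p _); apply: val_inj => /=.
by rewrite modnDr modn_small.
Qed.
Lemma rot_mulB B q (H : {ffun 'I_B -> bool}) d :
  rot d H = H -> rot (q * d) H = H.
Proof.
move=> hd; elim: q => [|q IH]; first by rewrite mul0n rot0.
by rewrite mulSn -rot_rot IH hd.
Qed.

Lemma period_exists B (H : {ffun 'I_B -> bool}) (B0 : (0 < B)%N) :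
  rot 1 H != H ->
  exists d, [/\ (1 < d)%N, (d %| B)%N & forall j, rot j H = H -> (d %| j)%N].
Proof.
move=> h1.
have ex : exists j, (0 < j)%N && (rot j H == H) by exists B; rewrite B0 rotB eqxx.
have [d /andP[d0 /eqP dH] dmin] := ex_minnP ex.
have stab : forall j, rot j H = H -> (d %| j)%N.
  move=> j hj; rewrite /dvdn; apply/eqP.
  have hr : rot (j %% d) H = H.
    by rewrite -{1}(@rot_mulB B (j %/ d) H d dH) rot_rot addnC -divn_eq.
  case: (posnP (j %% d)) => // rpos.
  have := dmin _ (introT andP (conj rpos (introT eqP hr))).
  by rewrite leqNgt ltn_pmod.
exists d; split => //; last by apply: stab; apply: rotB.
rewrite ltn_neqAle d0 andbT; apply/eqP => d1; move: h1; by rewrite d1 dH eqxx.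
Qed.
Definition phi {R : realType} {B} (H : {ffun 'I_B -> bool}) (w : R[i])
  (p : {ffun 'I_B -> bool}) : R[i] :=
  \sum_(0 <= j < B) ((rot j p == H)%:R * w ^+ j).

Lemma phi_rot1 (R : realType) B (H : {ffun 'I_B -> bool}) (w : R[i]) p :
  (0 < B)%N -> w ^+ B = 1 -> w * phi H w (rot 1 p) = phi H w p.
Proof.
case: B H p => // B H p _ wB.
rewrite /phi mulr_sumr.
have E : forall j, w * ((rot j (rot 1 p) == H)%:R * w ^+ j) =
     (rot j.+1 p == H)%:R * w ^+ j.+1.
  by move=> j; rewrite rot_rot addn1 exprS; ring.
under eq_bigr do rewrite E.
rewrite [RHS]big_nat_recl //.
by rewrite big_nat_recr //= rotB wB expr0 rot0 addrC.
Qed.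



Lemma phi_H_neq0 {R : realType} B (H : {ffun 'I_B -> bool}) (w : R[i]) :
  (0 < B)%N -> (forall j, rot j H = H -> w ^+ j = 1) -> phi H w H != 0.
Proof.
case: B H => // B H _ hw.
rewrite /phi.
have E : forall j, (rot j H == H)%:R * w ^+ j = ((rot j H == H) : nat)%:R :> R[i].
  move=> j; case: eqP => [/hw ->|_]; by rewrite ?mulr1 ?mul0r.
under eq_bigr do rewrite E.
rewrite -natr_sum big_nat_recl //= rot0 eqxx pnatr_eq0.
by [].
Qed.

Lemma cyl_meas (n : int) (e : bool) : measurable [set y : Omega | y n = e].
Proof. by apply: sub_gen_smallest; exists n, e. Qed.

Lemma countable_bigcap_meas (U : countType) (F : U -> set Omega) :
  (forall i, measurable (F i)) -> measurable (\bigcap_i F i).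
Proof.
move=> hF; rewrite -(setCK (\bigcap_i F i)) setC_bigcap; apply: measurableC.
apply: countable_bigcupT_measurable; first exact: countableP.
by move=> i; apply: measurableC.
Qed.

Lemma Mset_meas B (r : int) : measurable [set y : Omega | miss B y r].
Proof.
have -> : [set y : Omega | miss B y r] =
   \bigcap_(m : int) [set y : Omega | y (r + m * B%:Z) = false].
  apply/seteqP; split => y /= h.
    by move=> m _; apply: h.
  by move=> m; apply: h.
by apply: countable_bigcap_meas => m; apply: cyl_meas.
Qed.

Definition Patset {B} (H : {ffun 'I_B -> bool}) : set Omega := [set y | pat B y = H].

Lemma Patset_meas B (H : {ffun 'I_B -> bool}) : measurable (Patset H).
Proof.
have -> : Patset H = \bigcap_(r in [set: 'I_B])
     [set y : Omega | `[< miss B y (nat_of_ord r)%:Z >] = H r].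
  apply/seteqP; split => y /=.
    by move=> <- r _; rewrite /pat ffunE.
  by move=> h; apply/ffunP => r; rewrite /pat ffunE h.
apply: fin_bigcap_measurable; first exact: finite_finset.
move=> r _; case: (H r).
  have -> : [set y : Omega | `[< miss B y (nat_of_ord r)%:Z >] = true] =
     [set y : Omega | miss B y (nat_of_ord r)%:Z].
    by apply/seteqP; split => y /= /asboolP.
  exact: Mset_meas.
have -> : [set y : Omega | `[< miss B y (nat_of_ord r)%:Z >] = false] =
     ~` [set y : Omega | miss B y (nat_of_ord r)%:Z].
  apply/seteqP; split => y /=.
    by move=> h hm; move: h; rewrite asboolT.
  by move=> h; apply/asboolPn.
by apply: measurableC; apply: Mset_meas.
Qed.

Lemma pat_meas_fun B {d'} {T' : sigmaRingType d'}
    (g : {ffun 'I_B -> bool} -> T') :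
  measurable_fun setT (fun y : Omega => g (pat B y)).
Proof.
move=> _ Y mY; rewrite setTI.
have -> : (fun y : Omega => g (pat B y)) @^-1` Y =
    \bigcup_(H in [set H | Y (g H)]) Patset H.
  apply/seteqP; split => y /=.
    by move=> hy; exists (pat B y).
  by move=> [H hH] hy; rewrite /Patset /= in hy; rewrite hy.
apply: fin_bigcup_measurable; first exact: finite_finset.
by move=> H _; apply: Patset_meas.
Qed.

Lemma int_mod_ord B (B0 : (0 < B)%N) (n : int) :
  exists r : 'I_B, (nat_of_ord r)%:Z = (n %% B%:Z)%Z.
Proof.
have h0 : (0 <= (n %% B%:Z)%Z)%R by apply: modz_ge0; rewrite eqz_nat -lt0n.
have h1 : ((n %% B%:Z)%Z < B%:Z)%R by apply: ltz_pmod; rewrite ltz_nat.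
have h2 : (`|(n %% B%:Z)%Z|%N < B)%N by rewrite -ltz_nat gez0_abs.
by exists (Ordinal h2) => /=; rewrite gez0_abs.
Qed.

Lemma Patset_allT_sub B (B0 : (0 < B)%N) :
  Patset ([ffun=> true] : {ffun 'I_B -> bool}) `<=` [set zero_seq].
Proof.
move=> y; rewrite /Patset /= => hy.
apply: funext => n; rewrite /zero_seq.
have [r hr] := int_mod_ord B B0 n.
have : pat B y r = true by rewrite hy ffunE.
rewrite /pat ffunE hr => /asboolP /miss_mod h.
by have := h 0; rewrite mul0r addr0.
Qed.

Lemma zero_meas : measurable [set zero_seq].
Proof.
have -> : [set zero_seq] = \bigcap_(n : int) [set y : Omega | y n = false].
  apply/seteqP; split => y /=.
    by move=> -> n _.
  by move=> h; apply: funext => n; apply: h.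
by apply: countable_bigcap_meas => n; apply: cyl_meas.
Qed.

Lemma shift_zero : Defs.shift @^-1` [set zero_seq] = [set zero_seq].
Proof.
apply/seteqP; split => y /=.
  move=> h; apply: funext => n; have := congr1 (fun f => f (n - 1)) h.
  by rewrite /Defs.shift /= subrK.
by move=> ->.
Qed.

Lemma ereal01 {R : realType} (x : \bar R) : (0 <= x)%E -> (x + 1 <= 1)%E -> x = 0%E.
Proof.
case: x => [r| |] //=; rewrite ?lee_fin => h0.
  by move=> h1; congr (_%:E); lra.
Qed.

Lemma ereal01' {R : realType} (x y : \bar R) : (0 <= x)%E -> y = 1%E -> (x + y <= 1)%E -> x = 0%E.
Proof. by move=> h0 -> h1; apply: ereal01. Qed.

Lemma ereal1 {R : realType} (x y : \bar R) : (y <= x)%E -> (x <= 1)%E -> y = 1%E -> x = 1%E.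
Proof. by move=> h1 h2 hy; rewrite hy in h1; apply/eqP; rewrite eq_le h1 h2. Qed.

Lemma zero_null (R : realType) (nu : probability Omega R) :
  ergodic nu -> (exists A : set Omega, measurable A /\ nu A <> \d_zero_seq A) ->
  nu [set zero_seq] = 0%E.
Proof.
move=> herg [A [mA hA]].
case: (herg _ zero_meas shift_zero) => // h1.
exfalso; apply: hA; rewrite diracE.
case: (boolP (zero_seq \in A)) => hz.
  have sub : [set zero_seq] `<=` A by move=> y /= ->; apply/set_mem.
  have := le_measure nu (mem_set zero_meas) (mem_set mA) sub.
  move=> h; apply: ereal1 h _ h1 => //.
  have hh := probability_le1 nu mA. exact: hh.
have dis : A `&` [set zero_seq] = set0.
  apply/seteqP; split => // y /= [hy hy0]; move: hz; rewrite hy0 in hy.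
  by rewrite (mem_set hy).
have := measureU nu mA zero_meas dis => hU.
have hle := probability_le1 nu (measurableU _ _ mA zero_meas).
rewrite hU in hle.
exact: (ereal01' _ _ (measure_ge0 nu A) h1 hle).
Qed.

Lemma Xeta_meas b : measurable (Xeta b).
Proof.
have -> : Xeta b = \bigcap_(m : int) \bigcap_(len : nat) \bigcup_(t : int)
    \bigcap_(j in [set j : nat | (j < len)%N])
      [set y : Omega | y (m + j%:Z) = Defs.eta b (t + j%:Z)].
  apply/seteqP; split => y /=.
    move=> h m _ len _; have [t ht] := h m len.
    by exists t => // j hj; apply: ht.
  move=> h m len; have [t _ ht] := h m I len I.
  by exists t => j hj; apply: ht.
apply: countable_bigcap_meas => m; apply: countable_bigcap_meas => len.
apply: countable_bigcupT_measurable; first exact: countableP.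
move=> t; apply: bigcap_measurableType => j _; exact: cyl_meas.
Qed.

Lemma Xeta_allF (b : nat -> nat) k (B0 : (0 < b k)%N) :
  Xeta b `&` Patset ([ffun=> false] : {ffun 'I_(b k) -> bool}) = set0.
Proof.
set B := b k.
apply/seteqP; split => // y /= [hX hy].
have hex : forall r : 'I_B, exists m : int, y ((nat_of_ord r)%:Z + m * B%:Z) = true.
  move=> r; have : pat B y r = false by rewrite /Patset /= in hy; rewrite hy ffunE.
  rewrite /pat ffunE => hf.
  have hn : ~ miss B y (nat_of_ord r)%:Z by apply/asboolPn; rewrite hf.
  case: (pselect (exists m : int, y ((nat_of_ord r)%:Z + m * B%:Z) = true)) => // hne.
  exfalso; apply: hn => m; case E: (y _) => //; exfalso; apply: hne; by exists m.
have [g hg] := choice hex.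
pose n (r : 'I_B) := ((nat_of_ord r)%:Z + g r * B%:Z)%R.
pose N := (\sum_(r : 'I_B) `|n r|%N)%N.
have [t ht] := hX (- N%:Z)%R (N.*2).+1.
have [r0 hr0] := int_mod_ord B B0 (- (t + N%:Z))%R.
have hN : (`|n r0|%N <= N)%N by rewrite /N (bigD1 r0) //= leq_addr.
have hpos : (0 <= n r0 + N%:Z)%R by lia.
have hj : (`|(n r0 + N%:Z)%R|%N < (N.*2).+1)%N by lia.
have := ht _ hj.
have -> : (- N%:Z + (`|(n r0 + N%:Z)%R|%N)%:Z)%R = n r0.
  by rewrite gez0_abs // addrC addrK.
rewrite hg => /esym /asboolP /(_ k).
apply.
rewrite gez0_abs //.
have E := divz_eq (- (t + N%:Z))%R B%:Z.
rewrite -hr0 in E.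
have -> : (t + (n r0 + N%:Z))%R = ((g r0 - divz (- (t + N%:Z)) B%:Z) * B%:Z)%R.
  rewrite /n; lia.
by rewrite abszM /= dvdn_mull.
Qed.

Lemma rot1_const B (H : {ffun 'I_B -> bool}) (B0 : (0 < B)%N) :
  rot 1 H = H -> H = [ffun=> true] \/ H = [ffun=> false].
Proof.
move=> h1.
pose o0 : 'I_B := Ordinal B0.
have hall : forall i (hi : (i < B)%N), H (Ordinal hi) = H o0.
  elim=> [|i IH] hi; first by congr (H _); apply: val_inj.
  have hi' : (i < B)%N by apply: ltnW.
  rewrite -(IH hi') -{2}h1 /rot ffunE; congr (H _); apply: val_inj => /=.
  by rewrite addn1 modn_small.
have hall' : forall r : 'I_B, H r = H o0.
  by move=> [i hi]; apply: hall.
case E: (H o0); [left|right]; apply/ffunP => r; by rewrite hall' E ffunE.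
Qed.

Lemma ereal_le0 {R : realType} (x y : \bar R) : y = 0%E -> (0 <= x)%E -> (x <= y)%E -> x = 0%E.
Proof. by move=> -> h1 h2; apply/eqP; rewrite eq_le h1 h2. Qed.

Lemma exists_good (R : realType) (nu : probability Omega R) (b : nat -> nat) k
  (B0 : (0 < b k)%N) :
  ergodic nu -> (exists A : set Omega, measurable A /\ nu A <> \d_zero_seq A) ->
  nu (Xeta b) = 1%E ->
  exists H : {ffun 'I_(b k) -> bool}, rot 1 H != H /\ (0 < nu (Patset H))%E.
Proof.
move=> herg hnd hsupp.
case: (pselect (exists H : {ffun 'I_(b k) -> bool}, rot 1 H != H /\ (0 < nu (Patset H))%E)) => // hno.
exfalso.
have h0 : forall H : {ffun 'I_(b k) -> bool}, nu (Patset H) = 0%E.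
  move=> H; case: (boolP (rot 1 H == H)) => [/eqP hc|hc].
    case: (@rot1_const _ _ B0 hc) => ->.
      have hle := le_measure nu (mem_set (Patset_meas _ _)) (mem_set zero_meas) (Patset_allT_sub _ B0).
      exact: (ereal_le0 _ _ (zero_null R nu herg hnd) (measure_ge0 nu _) hle).
    have dis := Xeta_allF b k B0.
    rewrite setIC in dis.
    have hU := measureU nu (Patset_meas _ _) (Xeta_meas b) dis.
    have hle := probability_le1 nu (measurableU _ _ (Patset_meas _ ([ffun=> false] : {ffun 'I_(b k) -> bool})) (Xeta_meas b)).
    rewrite hU in hle.
    exact: (ereal01' _ _ (measure_ge0 nu _) hsupp hle).
  have := measure_ge0 nu (Patset H); rewrite le_eqVlt => /orP[/eqP <- //|hlt].
  by exfalso; apply: hno; exists H.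
have hT : [set: Omega] = \bigcup_(H in [set: {ffun 'I_(b k) -> bool}]) Patset H.
  apply/seteqP; split => y _ //.
  by exists (pat (b k) y).
have := probability_setT nu.
rewrite hT measure_fin_bigcup //.
- rewrite fsbig1; last by move=> H _; exact: h0.
  by move=> [] /esym /eqP; rewrite oner_eq0.
- exact: finite_finset.
- move=> H1 H2 _ _ [y [/= h1 h2]]; by rewrite -h1 -h2.
- by move=> H _; apply: Patset_meas.
Qed.

Lemma fin_mul_lt {R : realType} (M : R) (y : \bar R) : y = 1%E -> (M%:E * y < +oo)%E.
Proof. by move=> ->; rewrite mule1 ltey. Qed.

Lemma eigen_of (R : realType) (nu : probability Omega R) B (B0 : (0 < B)%N)
  (H : {ffun 'I_B -> bool}) (hpos : (0 < nu (Patset H))%E) d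
  (hdB : (d %| B)%N) (hstab : forall j, rot j H = H -> (d %| j)%N)
  (z : R[i]) (hz : z ^+ d = 1) : sys_eigenvalue nu z.
Proof.
have d0 : (0 < d)%N by case: d hdB {hstab hz} => //; rewrite dvd0n => /eqP E; move: B0; rewrite E.
pose w := z ^+ d.-1.
have wd : w ^+ d = 1 by rewrite /w -exprM mulnC exprM hz expr1n.
have wj : forall j, (d %| j)%N -> w ^+ j = 1.
  by move=> j /dvdnP [q ->]; rewrite mulnC exprM wd expr1n.
have wz : z * w = 1 by rewrite /w -exprS prednK.
pose f (y : Omega) := phi H w (pat B y).
exists f; split; [split; [split|] | split].
- exact: (pat_meas_fun B (fun p => complex.Re (phi H w p))).
- exact: (pat_meas_fun B (fun p => complex.Im (phi H w p))).
- pose g (p : {ffun 'I_B -> bool}) := ((complex.Re (phi H w p)) ^+ 2 + (complex.Im (phi H w p)) ^+ 2).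
  pose M := \sum_(p : {ffun 'I_B -> bool}) g p.
  have g0 : forall p, 0 <= g p by move=> p; rewrite /g addr_ge0 // sqr_ge0.
  have gM : forall p, g p <= M by move=> p; rewrite /M (bigD1 p) //= lerDl sumr_ge0.
  apply: (le_lt_trans (y := (\int[nu]_x (cst M%:E) x)%E)).
    apply: ge0_le_integral => //.
    + by move=> x _; rewrite lee_fin g0.
    + exact: (@pat_meas_fun B _ (measurable_realfun.constructive_ereal_extended__canonical__measurable_structure_SigmaRing R) (fun p => (g p)%:E)).
    + by move=> x _; rewrite lee_fin gM.
  rewrite integral_cst //; exact: (fin_mul_lt M _ (probability_setT nu)).
- move=> hae.
  case: hae => N [mN nN sub].
  have sH : Patset H `<=` N.
    move=> y hy; apply: sub => /= hf; move: hf; rewrite /f.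
    rewrite /Patset /= in hy; rewrite hy => /eqP; apply/negP.
    exact: (phi_H_neq0 B H w B0 (fun j hj => wj j (hstab j hj))).
  have hle := le_measure nu (mem_set (Patset_meas _ _)) (mem_set mN) sH.
  have e := ereal_le0 _ _ nN (measure_ge0 nu _) hle.
  by move: hpos; rewrite e ltxx.
- apply: aeW => x; rewrite /f pat_shift.
  by rewrite -(phi_rot1 _ _ H w (pat B x) B0 (wj B hdB)) mulrA wz mul1r.
Qed.

Lemma nontriv_root (R : realType) d : (1 < d)%N -> exists z : R[i], z ^+ d = 1 /\ z != 1.
Proof.
move=> hd.
pose q : {poly R[i]} := \poly_(i < d) 1.
have sq : size q = d by rewrite /q size_poly_eq // oner_neq0.
have [z hz] : exists z, root q z.
  by apply/closed_rootP; rewrite sq; case: d hd {q sq} => // [[|]].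
have qz : q.[z] = \sum_(i < d) z ^+ i.
  by rewrite /q horner_poly; apply: eq_bigr => i _; rewrite mul1r.
exists z; split.
  apply/eqP; rewrite -subr_eq0 subrX1 -qz.
  by move/eqP: hz => ->; rewrite mulr0.
apply/eqP => z1; move: hz; rewrite /root qz z1.
under eq_bigr do rewrite expr1n.
by rewrite sumr_const card_ord pnatr_eq0; case: d hd {q sq qz}.
Qed.

Lemma coprime_root1 (R : realType) (z : R[i]) a b :
  (0 < a)%N -> coprime a b -> z ^+ a = 1 -> z ^+ b = 1 -> z = 1.
Proof.
move=> a0 hab za zb.
have [x _ hx] := Bezoutl b a0.
rewrite (eqP hab) in hx.
have [y hy] := dvdnP hx.
have : z ^+ (1 + x * b) = 1 by rewrite hy mulnC exprM za expr1n.
by rewrite exprD expr1 mulnC exprM zb expr1n mulr1.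
Qed.

Theorem mainTheorem8 (R : realType) (b : nat -> nat)
  (hb2 : forall i, (2 <= b i)%N)
  (hcop : forall i j, i <> j -> coprime (b i) (b j))
  (hsum : (\sum_(0 <= i <oo) (((b i)%:R^-1 : R)%:E) < +oo)%E)
  (nu : probability Omega R)
  (hsupp : nu (Xeta b) = 1%E)
  (hinv : shift_invariant nu)
  (herg : ergodic nu)
  (hnd : exists A : set Omega, measurable A /\ nu A <> \d_zero_seq A) :
  (forall k : nat, exists b' : nat,
     [/\ (1 < b')%N, (b' %| b k)%N &
         forall z : R[i], z ^+ b' = 1 -> sys_eigenvalue nu z]) /\
  infinite_set [set z : R[i] | sys_eigenvalue nu z /\
                               exists n : nat, (0 < n)%N /\ z ^+ n = 1].
Proof.
have part1 : forall k : nat, exists b' : nat,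
     [/\ (1 < b')%N, (b' %| b k)%N &
         forall z : R[i], z ^+ b' = 1 -> sys_eigenvalue nu z].
  move=> k.
  have B0 : (0 < b k)%N by apply: leq_trans (hb2 k).
  have [H [h1 hpos]] := exists_good R nu b k B0 herg hnd hsupp.
  have [d [d1 hdB hst]] := period_exists _ _ B0 h1.
  exists d; split => // z hz.
  exact: (eigen_of R nu (b k) B0 H hpos d hdB hst z hz).
split => //.
have [D hD] := choice part1.
have hz : forall k, exists z : R[i], z ^+ D k = 1 /\ z != 1.
  by move=> k; have [h1 _ _] := hD k; apply: nontriv_root.
have [Z hZ] := choice hz.
have inj : injective Z.
  move=> i j hij; case: (eqVneq i j) => // /eqP nij; exfalso.
  have [hi1 hidv _] := hD i; have [hj1 hjdv _] := hD j.
  have cop : coprime (D i) (D j).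

    apply: (coprime_dvdl hidv). apply: (coprime_dvdr hjdv). exact: hcop.
  have [zi zi1] := hZ i; have [zj zj1] := hZ j.
  rewrite hij in zi zi1.
  have e := coprime_root1 R (Z j) (D i) (D j) (ltnW hi1) cop zi zj.
  by move: zj1; rewrite e eqxx.
move=> hfin.
have := finite_preimage (f := Z) (in2W (fun i j => @inj i j)) hfin.
have -> : Z @^-1` [set z : R[i] | sys_eigenvalue nu z /\
             exists n : nat, (0 < n)%N /\ z ^+ n = 1] = [set: nat].
  apply/seteqP; split => // k _ /=.
  have [hk1 _ hk] := hD k; have [zk _] := hZ k.
  split; first exact: hk.
  by exists (D k); split => //; apply: ltnW.
exact: infinite_nat.
Qed.
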